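(* Let $G$ and $H$ be graphs with $i_G$ and $i_H$ isolated vertices, respectively. Then $$\rho_o(G\boxtimes H)\geq\rho(G^-)\rho(H^-)+i_G\rho_o(H)+i_H\rho_o(G)-i_Gi_H$$ and $$\rho_o(G\boxtimes H)\leq \min\{\rho(G^-)\gamma_f(H^-),\ \rho(H^-)\gamma_f(G^-)\}+i_G\rho_o(H)+i_H\rho_o(G)-i_Gi_H.$$
   Context: All graphs are finite and simple. $G^-$ denotes the graph obtained from $G$ by deleting all isolated vertices. A packing of $G$ is a set $P\subseteq V(G)$ with $N[u]\cap N[v]=\emptyset$ for all distinct $u,v\in P$ ($N[\cdot]$ the closed neighborhood); $\rho(G)$ is the maximum size of a packing. An open packing is a set whose vertices have pairwise disjoint open neighborhoods; $\rho_o(G)$ is its maximum size. The fractional domination number $\gamma_f(G)$ is the minimum of $\sum_{v\in V(G)} f(v)$ over all functions $f:V(G)\to[0,1]$ with $\sum_{u\in N[v]}f(u)\ge 1$ for every $v\in V(G)$ (taken to be $0$ for the empty graph). The strong product $G\boxtimes H$ has vertex set $V(G)\times V(H)$, where distinct $(g,h),(g',h')$ are adjacent iff ($g=g'$ or $gg'\in E(G)$) and ($h=h'$ or $hh'\in E(H)$). *)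

(* Defs.v *)
From HB Require Import structures.
From mathcomp Require Import all_boot all_order all_algebra.
From Stdlib Require Import ClassicalEpsilon.
Set Implicit Arguments. Unset Strict Implicit. Unset Printing Implicit Defensive.
Import Order.TTheory GRing.Theory Num.Theory.

(* A finite simple graph is a relation [e : rel T] on a finType [T],
   assumed symmetric and irreflexive in the theorem statement. *)

Section Graphs.
Variable T : finType.
Variable e : rel T.

Definition onbhd (v : T) : {set T} := [set u | e v u].
Definition cnbhd (v : T) : {set T} := v |: onbhd v.

Definition is_packing (P : {set T}) : bool :=
  [forall u in P, forall v in P, (u != v) ==> [disjoint cnbhd u & cnbhd v]].
Definition is_open_packing (P : {set T}) : bool :=
  [forall u in P, forall v in P, (u != v) ==> [disjoint onbhd u & onbhd v]].

Definition rho : nat := \max_(P : {set T} | is_packing P) #|P|.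
Definition rho_o : nat := \max_(P : {set T} | is_open_packing P) #|P|.

Definition nonisolated (v : T) : bool := [exists u, e v u].
Definition num_isolated : nat := #|[set v | ~~ nonisolated v]|.

Definition frac_dominating (R : realFieldType) (f : T -> R) : Prop :=
  (forall v, 0 <= f v <= 1)%R /\ (forall v, (1 <= \sum_(u in cnbhd v) f u)%R).

Definition is_gamma_f (R : realFieldType) (r : R) : Prop :=
  (exists f : T -> R, frac_dominating f /\ (\sum_(v : T) f v)%R = r) /\
  (forall f : T -> R, frac_dominating f -> (r <= \sum_(v : T) f v)%R).

(* the minimum value (it exists: the LP is feasible and bounded);
   for the empty graph this is 0 automatically. *)
Definition gamma_f (R : realFieldType) : R :=
  epsilon (inhabits 0%R) (@is_gamma_f R).

End Graphs.

Definition minus_vert (T : finType) (e : rel T) : finType :=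
  {v : T | nonisolated e v}.
Definition minus_rel (T : finType) (e : rel T) : rel (minus_vert e) :=
  fun x y => e (val x) (val y).

Definition strong_prod (T U : finType) (g : rel T) (h : rel U) : rel (T * U) :=
  fun x y => [&& x != y, (x.1 == y.1) || g x.1 y.1 & (x.2 == y.2) || h x.2 y.2].
Arguments minus_vert {T} e.
Arguments minus_rel {T} e _ _.
Arguments gamma_f {T} e R.
Arguments rho {T} e.
Arguments rho_o {T} e.
Arguments num_isolated {T} e.

(* Main.v *)
Require Import Defs.
From HB Require Import structures.
From mathcomp Require Import all_boot all_order all_algebra.
From mathcomp Require Import ring lra zify.
From Stdlib Require Import ClassicalEpsilon.
Set Implicit Arguments. Unset Strict Implicit. Unset Printing Implicit Defensive.
Import Order.TTheory GRing.Theory Num.Theory.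

Lemma disjP (T : finType) (A B : {set T}) :
  reflect (forall z, z \in A -> z \in B -> False) [disjoint A & B].
Proof.
rewrite -setI_eq0; apply: (iffP eqP) => [H z zA zB | H].
  have : z \in A :&: B by rewrite in_setI zA zB.
  by rewrite H in_set0.
apply/setP => z; rewrite in_setI in_set0.
by case zA: (z \in A); case zB: (z \in B) => //; case: (H z).
Qed.

Lemma cnbhdE (T : finType) (e : rel T) x y : (y \in cnbhd e x) = (y == x) || e x y.
Proof. by rewrite /cnbhd in_setU1 /onbhd in_set. Qed.

Lemma onbhdE (T : finType) (e : rel T) x y : (y \in onbhd e x) = e x y.
Proof. by rewrite /onbhd in_set. Qed.

Lemma noniso_intro (T : finType) (e : rel T) x y : e x y -> nonisolated e x.
Proof. by move=> H; apply/existsP; exists y. Qed.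

Lemma op_disj (T : finType) (e : rel T) (S : {set T}) s t :
  is_open_packing e S -> s \in S -> t \in S -> s != t ->
  [disjoint onbhd e s & onbhd e t].
Proof.
by move=> /forallP /(_ s) /implyP /(_ _) H sS tS st; move: (H sS) => /forallP /(_ t) /implyP /(_ tS) /implyP /(_ st).
Qed.

Lemma pk_disj (T : finType) (e : rel T) (S : {set T}) s t :
  is_packing e S -> s \in S -> t \in S -> s != t ->
  [disjoint cnbhd e s & cnbhd e t].
Proof.
by move=> /forallP /(_ s) /implyP /(_ _) H sS tS st; move: (H sS) => /forallP /(_ t) /implyP /(_ tS) /implyP /(_ st).
Qed.

Lemma half (T U : finType) (g : rel T) (h : rel U)
  (gsym : symmetric g) (girr : irreflexive g) (hsym : symmetric h) (hirr : irreflexive h)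
  (a c : T) (b d : U) :
  (a, b) != (c, d) -> a \in cnbhd g c -> b \in cnbhd h d ->
  nonisolated g a -> nonisolated h b ->
  exists w, strong_prod g h (a, b) w && strong_prod g h (c, d) w.
Proof.
rewrite !cnbhdE /strong_prod /= xpair_eqE => ne Hac Hbd /existsP [x' gx'] /existsP [z hz].
have ax' : a != x' by apply: contraTneq gx' => ->; rewrite girr.
have bz : b != z by apply: contraTneq hz => ->; rewrite hirr.
case: (eqVneq c a) => [ca | ca].
  subst c; rewrite eqxx /= in ne.
  exists (x', b); rewrite /= !xpair_eqE (negbTE ax') gx' orbT eqxx /=.
  by rewrite eq_sym.
case: (eqVneq d b) => [db | db].
  subst d; exists (a, z); rewrite /= !xpair_eqE (negbTE bz) hz !orbT andbF eqxx /=.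
  by rewrite andbF /= andbT eq_sym.
exists (c, b); rewrite /= !xpair_eqE eqxx (eq_sym a c) (negbTE ca) /= (negbTE db) /=.
rewrite eqxx andbT andbF /=; apply/andP; split.
  by case/orP: Hac => [/eqP ac|]; [rewrite ac eqxx in ca | rewrite gsym].
by case/orP: Hbd => [/eqP bd|//]; rewrite bd eqxx in db.
Qed.

Lemma common (T U : finType) (g : rel T) (h : rel U)
  (gsym : symmetric g) (girr : irreflexive g) (hsym : symmetric h) (hirr : irreflexive h)
  (s t : T * U) x y :
  s != t -> x \in cnbhd g s.1 -> x \in cnbhd g t.1 -> y \in cnbhd h s.2 -> y \in cnbhd h t.2 ->
  nonisolated g s.1 -> nonisolated g t.1 -> nonisolated h y ->
  exists w, strong_prod g h s w && strong_prod g h t w.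
Proof.
case: s => a b; case: t => c d /= ne xa xc yb yd na nc ny.
case: (eqVneq (x, y) (a, b)) => [exy | ne1].
  by case: exy => ex ey; subst x y; exact: half.
case: (eqVneq (x, y) (c, d)) => [exy | ne2].
  case: exy => ex ey; subst x y.
  have ne' : (c, d) != (a, b) by rewrite eq_sym.
  have [w Hw] := half gsym girr hsym hirr ne' xa yb nc ny.
  by exists w; rewrite andbC.
exists (x, y); rewrite /strong_prod /= (eq_sym (a, b)) ne1 (eq_sym (c, d)) ne2 /=.
move: xa xc yb yd; rewrite !cnbhdE !(eq_sym x) !(eq_sym y).
by move=> -> -> -> ->.
Qed.

Lemma packing_to_minus (T : finType) (e : rel T) (A : {set T}) :
  (forall x, x \in A -> nonisolated e x) -> is_packing e A -> (#|A| <= rho (minus_rel e))%N.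
Proof.
move=> HA Hp.
pose P' := [set x : minus_vert e | val x \in A].
have -> : A = val @: P'.
  apply/setP => z; apply/idP/imsetP => [zA | [x]].
    by exists (exist _ z (HA z zA)) => //; rewrite in_set.
  by rewrite in_set => xA ->.
rewrite card_imset; last exact: val_inj.
apply: leq_bigmax_cond.
apply/forallP => x; apply/implyP => xP; apply/forallP => y; apply/implyP => yP.
apply/implyP => xy; apply/disjP => z.
rewrite !cnbhdE /minus_rel -!val_eqE => zx zy.
rewrite in_set in xP; rewrite in_set in yP.
have := pk_disj Hp xP yP; rewrite val_eqE => /(_ xy) /disjP /(_ (val z)); apply.
  by rewrite cnbhdE.
by rewrite cnbhdE.
Qed.

Lemma Bu_bound (T U : finType) (g : rel T) (h : rel U)
  (gsym : symmetric g) (girr : irreflexive g) (hsym : symmetric h) (hirr : irreflexive h)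
  (S : {set T * U}) y :
  is_open_packing (strong_prod g h) S ->
  (forall s, s \in S -> nonisolated g s.1) -> nonisolated h y ->
  (#|[set s in S | y \in cnbhd h s.2]| <= rho (minus_rel g))%N.
Proof.
move=> Hop Hni ny.
set B := [set s in S | y \in cnbhd h s.2].
have Bmem : forall s, (s \in B) = (s \in S) && (y \in cnbhd h s.2) by move=> s; rewrite in_set.
have contra : forall s t x, s \in B -> t \in B -> s != t ->
    x \in cnbhd g s.1 -> x \in cnbhd g t.1 -> False.
  move=> s t x; rewrite !Bmem => /andP [sS ys] /andP [tS yt] st xs xt.
  have [w /andP [sw tw]] := common gsym girr hsym hirr st xs xt ys yt (Hni _ sS) (Hni _ tS) ny.
  by move: (op_disj Hop sS tS st) => /disjP /(_ w); rewrite !onbhdE; apply.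
have inj : {in B &, injective fst}.
  move=> s t sB tB st; apply/eqP; apply/negPn/negP => ne.
  apply: (contra s t s.1) => //; first by rewrite cnbhdE eqxx.
  by rewrite st cnbhdE eqxx.
rewrite -(card_in_imset inj).
apply: packing_to_minus.
  by move=> x /imsetP [s]; rewrite Bmem => /andP [sS _] ->; apply: Hni.
apply/forallP => a; apply/implyP => /imsetP [s sB ->].
apply/forallP => b; apply/implyP => /imsetP [t tB ->].
apply/implyP => ne; apply/disjP => z zs zt.
apply: (contra s t z) => //.
by apply: contraNneq ne => ->.
Qed.



Lemma iso_noadj (T : finType) (e : rel T) x y : ~~ nonisolated e x -> e x y = false.
Proof. by move=> H; apply/negP => /noniso_intro; apply/negP. Qed.

Lemma op_sub (T : finType) (e : rel T) (A B : {set T}) :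
  A \subset B -> is_open_packing e B -> is_open_packing e A.
Proof.
move=> /subsetP AB HB; apply/forallP => u; apply/implyP => uA; apply/forallP => v.
apply/implyP => vA; apply/implyP => uv; exact: op_disj HB (AB _ uA) (AB _ vA) uv.
Qed.

Lemma op_add_iso (T : finType) (e : rel T) (A : {set T}) :
  is_open_packing e A -> is_open_packing e (A :|: [set v | ~~ nonisolated e v]).
Proof.
move=> HA; apply/forallP => u; apply/implyP; rewrite in_setU in_set => uA.
apply/forallP => v; apply/implyP; rewrite in_setU in_set => vA.
apply/implyP => uv; apply/disjP => z; rewrite !onbhdE => uz vz.
case/orP: uA => [uA|]; last by move=> H; rewrite (iso_noadj z H) in uz.
case/orP: vA => [vA|]; last by move=> H; rewrite (iso_noadj z H) in vz.
by move: (op_disj HA uA vA uv) => /disjP /(_ z); rewrite !onbhdE; apply.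
Qed.

Lemma iso_le_rho_o (T : finType) (e : rel T) : (num_isolated e <= rho_o e)%N.
Proof.
apply: leq_bigmax_cond; rewrite -[X in is_open_packing e X]set0U.
apply: op_add_iso; apply/forallP => u; apply/implyP; by rewrite in_set0.
Qed.

Lemma fiber_op1 (T U : finType) (g : rel T) (h : rel U) (girr : irreflexive g)
  (S : {set T * U}) y :
  is_open_packing (strong_prod g h) S ->
  is_open_packing g [set s.1 | s in [set s in S | s.2 == y]].
Proof.
move=> Hop; apply/forallP => a; apply/implyP => /imsetP [s]; rewrite in_set => /andP [sS /eqP sy] ->.
apply/forallP => b; apply/implyP => /imsetP [t]; rewrite in_set => /andP [tS /eqP ty] ->.
apply/implyP => st; apply/disjP => z; rewrite !onbhdE => gsz gtz.
have ne : s != t by apply: contraNneq st => ->.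
move: (op_disj Hop sS tS ne) => /disjP /(_ (z, y)); rewrite !onbhdE; apply.
  rewrite /strong_prod /= gsz orbT sy eqxx /= andbT; apply: contraTneq gsz => ->.
  by rewrite girr.
rewrite /strong_prod /= gtz orbT ty eqxx /= andbT; apply: contraTneq gtz => ->.
by rewrite girr.
Qed.

Lemma fiber_op2 (T U : finType) (g : rel T) (h : rel U) (hirr : irreflexive h)
  (S : {set T * U}) x :
  is_open_packing (strong_prod g h) S ->
  is_open_packing h [set s.2 | s in [set s in S | s.1 == x]].
Proof.
move=> Hop; apply/forallP => a; apply/implyP => /imsetP [s]; rewrite in_set => /andP [sS /eqP sy] ->.
apply/forallP => b; apply/implyP => /imsetP [t]; rewrite in_set => /andP [tS /eqP ty] ->.
apply/implyP => st; apply/disjP => z; rewrite !onbhdE => gsz gtz.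
have ne : s != t by apply: contraNneq st => ->.
move: (op_disj Hop sS tS ne) => /disjP /(_ (x, z)); rewrite !onbhdE; apply.
  rewrite /strong_prod /= gsz orbT sy eqxx /= andbT; apply: contraTneq gsz => ->.
  by rewrite hirr.
rewrite /strong_prod /= gtz orbT ty eqxx /= andbT; apply: contraTneq gtz => ->.
by rewrite hirr.
Qed.

Definition swp (T U : Type) (s : T * U) : U * T := (s.2, s.1).

Lemma swpK (T U : Type) : cancel (@swp T U) (@swp U T).
Proof. by case. Qed.

Lemma sp_swp (T U : finType) (g : rel T) (h : rel U) s w :
  strong_prod h g (swp s) w = strong_prod g h s (swp w).
Proof.
case: s => a b; case: w => c d; rewrite /strong_prod /swp /= !xpair_eqE.
by rewrite (andbC (b == c)); case: ((a == d) || g a d); case: ((b == c) || h b c); rewrite /= ?andbF.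
Qed.

Lemma op_swap (T U : finType) (g : rel T) (h : rel U) (S : {set T * U}) :
  is_open_packing (strong_prod g h) S -> is_open_packing (strong_prod h g) (@swp T U @: S).
Proof.
move=> Hop; apply/forallP => a; apply/implyP => /imsetP [s sS ->].
apply/forallP => b; apply/implyP => /imsetP [t tS ->].
apply/implyP => st; apply/disjP => z; rewrite !onbhdE !sp_swp => H1 H2.
have ne : s != t by apply: contraNneq st => ->.
by move: (op_disj Hop sS tS ne) => /disjP /(_ (swp z)); rewrite !onbhdE; apply.
Qed.

Lemma iso_cdisj (T : finType) (e : rel T) (esym : symmetric e) x y :
  ~~ nonisolated e x -> x != y -> [disjoint cnbhd e x & cnbhd e y].
Proof.
move=> ix xy; apply/disjP => z; rewrite !cnbhdE (iso_noadj _ ix) orbF => /eqP -> /orP [].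
  by rewrite (negbTE xy).
by rewrite esym (iso_noadj _ ix).
Qed.

Lemma ruleA (T U : finType) (g : rel T) (h : rel U) s t :
  [disjoint cnbhd g s.1 & cnbhd g t.1] ->
  [disjoint onbhd (strong_prod g h) s & onbhd (strong_prod g h) t].
Proof.
move=> /disjP D; apply/disjP => z; rewrite !onbhdE /strong_prod => /and3P [_ H1 _] /and3P [_ H2 _].
by apply: (D z.1); rewrite cnbhdE eq_sym.
Qed.

Lemma ruleB (T U : finType) (g : rel T) (h : rel U) s t :
  [disjoint cnbhd h s.2 & cnbhd h t.2] ->
  [disjoint onbhd (strong_prod g h) s & onbhd (strong_prod g h) t].
Proof.
move=> /disjP D; apply/disjP => z; rewrite !onbhdE /strong_prod => /and3P [_ _ H1] /and3P [_ _ H2].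
by apply: (D z.2); rewrite cnbhdE eq_sym.
Qed.

Lemma ruleA' (T U : finType) (g : rel T) (h : rel U) (gsym : symmetric g) s t :
  s.1 != t.1 -> ~~ nonisolated g s.1 || ~~ nonisolated g t.1 ->
  [disjoint onbhd (strong_prod g h) s & onbhd (strong_prod g h) t].
Proof.
move=> ne /orP [] H; apply: ruleA; first exact: iso_cdisj.
by rewrite disjoint_sym; apply: iso_cdisj => //; rewrite eq_sym.
Qed.

Lemma ruleB' (T U : finType) (g : rel T) (h : rel U) (hsym : symmetric h) s t :
  s.2 != t.2 -> ~~ nonisolated h s.2 || ~~ nonisolated h t.2 ->
  [disjoint onbhd (strong_prod g h) s & onbhd (strong_prod g h) t].
Proof.
move=> ne /orP [] H; apply: ruleB; first exact: iso_cdisj.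
by rewrite disjoint_sym; apply: iso_cdisj => //; rewrite eq_sym.
Qed.

Lemma ruleC (T U : finType) (g : rel T) (h : rel U) s t :
  s.1 = t.1 -> ~~ nonisolated g s.1 -> [disjoint onbhd h s.2 & onbhd h t.2] ->
  [disjoint onbhd (strong_prod g h) s & onbhd (strong_prod g h) t].
Proof.
case: s => a b; case: t => c d /= <- ia /disjP D; apply/disjP => -[x y].
rewrite !onbhdE /strong_prod /= !xpair_eqE (iso_noadj _ ia) !orbF.
move=> /and3P [ne1 /eqP ax H1] /and3P [ne2 _ H2]; subst x.
move: ne1 ne2; rewrite eqxx /= => ne1 ne2.
move: H1 H2 => /orP [/eqP E | H1]; first by rewrite E eqxx in ne1.
move=> /orP [/eqP E | H2]; first by rewrite E eqxx in ne2.
by apply: (D y); rewrite onbhdE.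
Qed.

Lemma ruleD (T U : finType) (g : rel T) (h : rel U) s t :
  s.2 = t.2 -> ~~ nonisolated h s.2 -> [disjoint onbhd g s.1 & onbhd g t.1] ->
  [disjoint onbhd (strong_prod g h) s & onbhd (strong_prod g h) t].
Proof.
case: s => a b; case: t => c d /= <- ib /disjP D; apply/disjP => -[x y].
rewrite !onbhdE /strong_prod /= !xpair_eqE (iso_noadj _ ib) !orbF.
move=> /and3P [ne1 H1 /eqP bx] /and3P [ne2 H2 _]; subst y.
move: ne1 ne2; rewrite eqxx /= !andbT => ne1 ne2.
move: H1 H2 => /orP [/eqP E | H1]; first by rewrite E eqxx in ne1.
move=> /orP [/eqP E | H2]; first by rewrite E eqxx in ne2.
by apply: (D x); rewrite onbhdE.
Qed.

Lemma rho_attained (T : finType) (e : rel T) : exists P, is_packing e P /\ rho e = #|P|.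
Proof.
have : (0 < #|is_packing e|)%N.
  apply/card_gt0P; exists set0; rewrite unfold_in; apply/forallP => u.
  by rewrite in_set0.
by case/(eq_bigmax_cond (fun P : {set T} => #|P|)) => P PP E; exists P.
Qed.

Lemma rho_o_attained (T : finType) (e : rel T) : exists P, is_open_packing e P /\ rho_o e = #|P|.
Proof.
have : (0 < #|is_open_packing e|)%N.
  apply/card_gt0P; exists set0; rewrite unfold_in; apply/forallP => u.
  by rewrite in_set0.
by case/(eq_bigmax_cond (fun P : {set T} => #|P|)) => P PP E; exists P.
Qed.

Lemma packing_from_minus (T : finType) (e : rel T) (esym : symmetric e) (P : {set minus_vert e}) :
  is_packing (minus_rel e) P -> is_packing e (val @: P).
Proof.
move=> HP; apply/forallP => a; apply/implyP => /imsetP [x xP ->].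
apply/forallP => b; apply/implyP => /imsetP [y yP ->].
apply/implyP => xy; apply/disjP => z zx zy.
have nz : nonisolated e z.
  move: zx; rewrite cnbhdE => /orP [/eqP -> | ]; first exact: valP.
  by rewrite esym => /noniso_intro.
have xy' : x != y by apply: contraNneq xy => ->.
move: (pk_disj HP xP yP xy') => /disjP /(_ (exist _ z nz)); apply.
  by rewrite cnbhdE -(inj_eq val_inj) /=; rewrite cnbhdE in zx.
by rewrite cnbhdE -(inj_eq val_inj) /=; rewrite cnbhdE in zy.
Qed.

Lemma inX (T U : finType) (A : {set T}) (B : {set U}) s :
  (s \in setX A B) = (s.1 \in A) && (s.2 \in B).
Proof. by case: s => a b; rewrite in_setX. Qed.

Lemma pair_neq (T U : eqType) (s t : T * U) : s != t -> s.1 = t.1 -> s.2 != t.2.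
Proof. by case: s => a b; case: t => c d /= ne e1; apply: contraNneq ne => e2; rewrite e1 e2. Qed.

Lemma pair_neq' (T U : eqType) (s t : T * U) : s != t -> s.2 = t.2 -> s.1 != t.1.
Proof. by case: s => a b; case: t => c d /= ne e1; apply: contraNneq ne => e2; rewrite e1 e2. Qed.

Lemma neq_noniso (T : finType) (e : rel T) x y : nonisolated e x -> ~~ nonisolated e y -> x != y.
Proof. by move=> a b; apply/eqP => E; rewrite -E a in b. Qed.

Lemma lower_nat (T U : finType) (g : rel T) (h : rel U)
  (gsym : symmetric g) (girr : irreflexive g) (hsym : symmetric h) (hirr : irreflexive h) :
  (rho (minus_rel g) * rho (minus_rel h) + num_isolated g * rho_o h + num_isolated h * rho_o g
     <= rho_o (strong_prod g h) + num_isolated g * num_isolated h)%N.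
Proof.
have [P [PP EP]] := rho_attained (minus_rel g).
have [Q [QQ EQ]] := rho_attained (minus_rel h).
have [OG0 [OG0P EOG]] := rho_o_attained g.
have [OH0 [OH0P EOH]] := rho_o_attained h.
pose IG := [set v | ~~ nonisolated g v].
pose IH := [set v | ~~ nonisolated h v].
have IGm : forall x, (x \in IG) = ~~ nonisolated g x by move=> x; rewrite in_set.
have IHm : forall x, (x \in IH) = ~~ nonisolated h x by move=> x; rewrite in_set.
have iGE : num_isolated g = #|IG| by [].
have iHE : num_isolated h = #|IH| by [].
pose OG := OG0 :|: IG. pose OH := OH0 :|: IH.
have OGP : is_open_packing g OG := op_add_iso OG0P.
have OHP : is_open_packing h OH := op_add_iso OH0P.
have cOG : #|OG| = rho_o g.
  apply/eqP; rewrite eqn_leq; apply/andP; split; first exact: leq_bigmax_cond.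
  by rewrite EOG subset_leq_card // subsetUl.
have cOH : #|OH| = rho_o h.
  apply/eqP; rewrite eqn_leq; apply/andP; split; first exact: leq_bigmax_cond.
  by rewrite EOH subset_leq_card // subsetUl.
pose P0 := val @: P. pose Q0 := val @: Q.
have cP0 : #|P0| = rho (minus_rel g) by rewrite card_imset ?EP //; exact: val_inj.
have cQ0 : #|Q0| = rho (minus_rel h) by rewrite card_imset ?EQ //; exact: val_inj.
have P0P : is_packing g P0 := packing_from_minus gsym PP.
have Q0P : is_packing h Q0 := packing_from_minus hsym QQ.
have P0n : forall x, x \in P0 -> nonisolated g x by move=> x /imsetP [y _ ->]; exact: valP.
have Q0n : forall x, x \in Q0 -> nonisolated h x by move=> x /imsetP [y _ ->]; exact: valP.
pose S1 := setX P0 Q0. pose S2 := setX IG OH. pose S3 := setX OG IH.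
pose S := S1 :|: (S2 :|: S3).
have I1 : S1 :&: (S2 :|: S3) = set0.
  apply/setP => s; rewrite in_set0 in_setI in_setU !inX IGm IHm.
  apply/negbTE; apply/negP => /andP [/andP [a1 a2] /orP [/andP [b1 _] | /andP [_ b2]]].
  - by rewrite (P0n _ a1) in b1.
  - by rewrite (Q0n _ a2) in b2.
have I2 : S2 :&: S3 = setX IG IH.
  apply/setP => s; rewrite in_setI !inX.
  apply/idP/idP => [/andP [/andP [a _] /andP [_ b]] | /andP [a b]]; first by rewrite a b.
  by rewrite a b /OG /OH !in_setU a b !orbT.
have cS : (#|S| + #|IG| * #|IH| = #|P0| * #|Q0| + #|IG| * #|OH| + #|OG| * #|IH|)%N.
  have := cardsUI S1 (S2 :|: S3); rewrite I1 cards0 addn0 => ->.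
  have := cardsUI S2 S3; rewrite I2 !cardsX; lia.
have Sop : is_open_packing (strong_prod g h) S.
  apply/forallP => s; apply/implyP => sS; apply/forallP => t; apply/implyP => tS; apply/implyP => st.
  have Sm : forall s, (s \in S) = [|| (s.1 \in P0) && (s.2 \in Q0), (s.1 \in IG) && (s.2 \in OH)
      | (s.1 \in OG) && (s.2 \in IH)].
    by move=> u; rewrite /S in_setU [_ \in S2 :|: S3]in_setU !inX.
  move: sS tS; rewrite !Sm.
  move=> /orP [/andP [s1 s2] | /orP [/andP [s1 s2] | /andP [s1 s2]]];
  move=> /orP [/andP [t1 t2] | /orP [/andP [t1 t2] | /andP [t1 t2]]].
  all: try rewrite IGm in s1; try rewrite IGm in t1; try rewrite IHm in s2; try rewrite IHm in t2.
  - case: (eqVneq s.1 t.1) => [e1 | n1].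
      by apply: ruleB; exact: pk_disj Q0P s2 t2 (pair_neq st e1).
    by apply: ruleA; exact: pk_disj P0P s1 t1 n1.
  - by apply: (ruleA' h gsym (neq_noniso (P0n _ s1) t1)); rewrite t1 orbT.
  - by apply: (ruleB' g hsym (neq_noniso (Q0n _ s2) t2)); rewrite t2 orbT.
  - by apply: (ruleA' h gsym); [rewrite eq_sym; exact: (neq_noniso (P0n _ t1) s1) | rewrite s1].
  - case: (eqVneq s.1 t.1) => [e1 | n1].
      by apply: ruleC => //; exact: op_disj OHP s2 t2 (pair_neq st e1).
    by apply: (ruleA' h gsym n1); rewrite s1.
  - case: (eqVneq s.1 t.1) => [e1 | n1].
      by apply: (ruleB' g hsym (pair_neq st e1)); rewrite t2 orbT.
    by apply: (ruleA' h gsym n1); rewrite s1.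
  - by apply: (ruleB' g hsym); [rewrite eq_sym; exact: (neq_noniso (Q0n _ t2) s2) | rewrite s2].
  - case: (eqVneq s.1 t.1) => [e1 | n1].
      by apply: (ruleB' g hsym (pair_neq st e1)); rewrite s2.
    by apply: (ruleA' h gsym n1); rewrite t1 orbT.
  - case: (eqVneq s.2 t.2) => [e2 | n2].
      by apply: ruleD => //; exact: op_disj OGP s1 t1 (pair_neq' st e2).
    by apply: (ruleB' g hsym n2); rewrite s2.
have : (#|S| <= rho_o (strong_prod g h))%N by apply: leq_bigmax_cond.
rewrite iGE iHE -cOG -cOH -cP0 -cQ0; lia.
Qed.

Lemma upper_nat (T U : finType) (g : rel T) (h : rel U)
  (gsym : symmetric g) (girr : irreflexive g) (hsym : symmetric h) (hirr : irreflexive h)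
  (S : {set T * U}) :
  is_open_packing (strong_prod g h) S ->
  (#|S| + num_isolated h * num_isolated g <=
   #|[set s in S | nonisolated g s.1 && nonisolated h s.2]| +
   num_isolated g * rho_o h + num_isolated h * rho_o g)%N.
Proof.
move=> Hop.
pose IG := [set v | ~~ nonisolated g v].
pose IH := [set v | ~~ nonisolated h v].
have IGm : forall x, (x \in IG) = ~~ nonisolated g x by move=> x; rewrite in_set.
have IHm : forall x, (x \in IH) = ~~ nonisolated h x by move=> x; rewrite in_set.
pose S1 := [set s in S | nonisolated g s.1 && nonisolated h s.2].
pose SA := [set s in S | ~~ nonisolated g s.1].
pose SB := [set s in S | nonisolated g s.1 && ~~ nonisolated h s.2].
have cover : (#|S| <= #|S1| + #|SA| + #|SB|)%N.
  apply: leq_trans (_ : #|S1 :|: SA :|: SB| <= _)%N.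
    apply: subset_leq_card; apply/subsetP => s sS; rewrite !in_setU !in_set sS /=.
    by case: (nonisolated g s.1); case: (nonisolated h s.2).
  apply: leq_trans (leq_card_setU _ _) _; rewrite leq_add2r.
  exact: leq_card_setU.
have cA : (#|SA| <= #|IG| * rho_o h)%N.
  rewrite -sum1_card (partition_big (fun s => s.1) (fun x => x \in IG)); last first.
    by move=> s; rewrite in_set IGm => /andP [].
  rewrite -sum_nat_const; apply: leq_sum => i iG.
  rewrite sum1dep_card.
  apply: (@leq_trans #|[set s in S | s.1 == i]|).
    apply: subset_leq_card; apply/subsetP => s; rewrite !in_set => /andP [/andP [-> _] ->] //.
  rewrite -(@card_in_imset _ _ (fun s : T * U => s.2)); last first.
    move=> s t; rewrite !in_set => /andP [_ /eqP si] /andP [_ /eqP ti] e2.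
    by move: si ti e2; case: s => a b; case: t => c d /= -> -> ->.
  apply: leq_bigmax_cond; apply: op_sub (fiber_op2 hirr i Hop).
  apply/subsetP => y /imsetP [s Hs ->]; apply/imsetP; exists s => //.
have cB : (#|SB| + #|IH| * #|IG| <= #|IH| * rho_o g)%N.
  have iGo : (#|IG| <= rho_o g)%N by apply: iso_le_rho_o.
  suff : (#|SB| <= #|IH| * (rho_o g - #|IG|))%N by rewrite mulnBr; nia.
  rewrite -sum1_card (partition_big (fun s => s.2) (fun x => x \in IH)); last first.
    by move=> s; rewrite in_set IHm => /andP [_ /andP []].
  rewrite -sum_nat_const; apply: leq_sum => j jH.
  rewrite sum1dep_card.
  pose Bj := [set s in S | nonisolated g s.1 && (s.2 == j)].
  apply: (@leq_trans #|Bj|).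
    apply: subset_leq_card; apply/subsetP => s; rewrite !in_set.
    by move=> /andP [/andP [-> /andP [-> _]] ->].
  have inj : {in Bj &, injective (fun s : T * U => s.1)}.
    move=> s t; rewrite !in_set => /andP [_ /andP [_ /eqP si]] /andP [_ /andP [_ /eqP ti]] e1.
    by move: si ti e1; case: s => a b; case: t => c d /= -> -> ->.
  rewrite -(card_in_imset inj).
  set Y := [set s.1 | s in Bj].
  have YP : is_open_packing g Y.
    apply: op_sub (fiber_op1 girr j Hop).
    apply/subsetP => x /imsetP [s]; rewrite in_set => /andP [sS /andP [_ sj]] ->.
    by apply/imsetP; exists s => //; rewrite in_set sS sj.
  have : (#|Y :|: IG| <= rho_o g)%N by apply: leq_bigmax_cond; apply: op_add_iso.
  have -> : #|Y :|: IG| = (#|Y| + #|IG|)%N.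
    have := cardsUI Y IG.
    have -> : Y :&: IG = set0.
      apply/setP => x; rewrite in_setI in_set0 IGm.
      apply/negbTE/negP => /andP [/imsetP [s]]; rewrite in_set => /andP [_ /andP [ns _]] ->.
      by rewrite ns.
    by rewrite cards0 addn0.
  lia.
have E1 : num_isolated g = #|IG| by [].
have E2 : num_isolated h = #|IH| by [].
rewrite E1 E2 -/S1; lia.
Qed.

Local Open Scope ring_scope.

Lemma sum_unit (R : realFieldType) (F : unit -> R) : \sum_(i : unit) F i = F tt.
Proof. by rewrite (bigD1 tt) //= big_pred0 ?addr0 // => -[]. Qed.

Definition satc (R : realFieldType) (I : finType) (x : I -> R) (c : {ffun I -> R} * R) : bool :=
  c.2 <= \sum_i c.1 i * x i.

Definition comb (R : realFieldType) (I : finType) (v : I) (p n : {ffun I -> R} * R) : {ffun I -> R} * R :=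
  ([ffun i => - n.1 v * p.1 i + p.1 v * n.1 i], - n.1 v * p.2 + p.1 v * n.2).

Definition elimv (R : realFieldType) (I : finType) (v : I) (L : seq ({ffun I -> R} * R)) :=
  filter (fun c : {ffun I -> R} * R => c.1 v == 0) L ++
  [seq comb v p n | p <- filter (fun c : {ffun I -> R} * R => 0 < c.1 v) L,
                    n <- filter (fun c : {ffun I -> R} * R => c.1 v < 0) L].

Definition upd (R : realFieldType) (I : finType) (x : I -> R) (v : I) (t : R) :=
  fun i => if i == v then t else x i.

Lemma sum_upd (R : realFieldType) (I : finType) (a x : I -> R) v t :
  \sum_i a i * upd x v t i = \sum_i a i * x i + a v * (t - x v).
Proof.
rewrite (bigD1 v) //= [\sum_i a i * x i](bigD1 v) //= /upd eqxx.
rewrite (eq_bigr (fun i => a i * x i)); last by move=> i /negbTE ->.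
ring.
Qed.

Lemma elimv_sound (R : realFieldType) (I : finType) v (L : seq ({ffun I -> R} * R)) x :
  all (satc x) L -> all (satc x) (elimv v L).
Proof.
move=> /allP HL; apply/allP => c; rewrite mem_cat => /orP [|].
  by rewrite mem_filter => /andP [_ /HL].
case/allpairsP => -[p n] /= [Hp Hn ->].
move: Hp Hn; rewrite !mem_filter => /andP [pv /HL Hp] /andP [nv /HL Hn].
rewrite /satc /comb /= in Hp Hn *.
under eq_bigr do rewrite ffunE.
rewrite (eq_bigr (fun i => - n.1 v * (p.1 i * x i) + p.1 v * (n.1 i * x i))); last first.
  by move=> i _; ring.
rewrite big_split /= -!mulr_sumr.
apply: lerD.
  by apply: ler_wpM2l => //; rewrite oppr_ge0 ltW.
by apply: ler_wpM2l => //; rewrite ltW.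
Qed.

Lemma foldr_max_ge (R : realFieldType) (A : eqType) (f : A -> R) z (s : seq A) c :
  c \in s -> f c <= foldr (fun c acc => Num.max (f c) acc) z s.
Proof.
elim: s => // a s IH; rewrite inE => /orP [/eqP -> | /IH H] /=; rewrite le_max.
  by rewrite lexx.
by rewrite H orbT.
Qed.

Lemma foldr_max_ge0 (R : realFieldType) (A : eqType) (f : A -> R) z (s : seq A) :
  z <= foldr (fun c acc => Num.max (f c) acc) z s.
Proof. by elim: s => [|a s IH] /=; rewrite ?lexx // le_max IH orbT. Qed.

Lemma foldr_max_le (R : realFieldType) (A : eqType) (f : A -> R) z (s : seq A) b :
  (forall c, c \in s -> f c <= b) -> z <= b ->
  foldr (fun c acc => Num.max (f c) acc) z s <= b.
Proof.
elim: s => [|a s IH] //= H zb; rewrite ge_max H ?mem_head //= IH // => c cs.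
by rewrite H // inE cs orbT.
Qed.

Lemma foldr_min_le (R : realFieldType) (A : eqType) (f : A -> R) z (s : seq A) c :
  c \in s -> foldr (fun c acc => Num.min (f c) acc) z s <= f c.
Proof.
elim: s => // a s IH; rewrite inE => /orP [/eqP -> | /IH H] /=; rewrite ge_min.
  by rewrite lexx.
by rewrite H orbT.
Qed.

Lemma elimv_complete (R : realFieldType) (I : finType) v (L : seq ({ffun I -> R} * R)) x :
  all (satc x) (elimv v L) -> exists t, all (satc (upd x v t)) L.
Proof.
move=> /allP H.
pose S (c : {ffun I -> R} * R) := \sum_i c.1 i * x i.
pose q (c : {ffun I -> R} * R) := (c.2 - S c) / c.1 v.
pose Ps := filter (fun c : {ffun I -> R} * R => 0 < c.1 v) L.
pose Ns := filter (fun c : {ffun I -> R} * R => c.1 v < 0) L.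
pose m := foldr (fun c acc => Num.min (q c) acc) 0 Ns.
pose d := foldr (fun c acc => Num.max (q c) acc) m Ps.
have key : forall p n, p \in Ps -> n \in Ns -> q p <= q n.
  move=> p n Hp Hn.
  have : satc x (comb v p n) by apply: H; rewrite mem_cat; apply/orP; right; apply/allpairsP; exists (p, n).
  move: Hp Hn; rewrite !mem_filter => /andP [pv _] /andP [nv _].
  rewrite /satc /comb /=.
  under eq_bigr do rewrite ffunE.
  rewrite (eq_bigr (fun i => - n.1 v * (p.1 i * x i) + p.1 v * (n.1 i * x i))); last first.
    by move=> i _; ring.
  rewrite big_split /= -!mulr_sumr => Hc.
  have pv0 : p.1 v != 0 by rewrite gt_eqF.
  have nv0 : n.1 v != 0 by rewrite lt_eqF.
  have Ep : p.2 - S p = q p * p.1 v by rewrite /q divfK.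
  have En : n.2 - S n = q n * n.1 v by rewrite /q divfK.
  have : (p.1 v * - n.1 v) * (q p - q n) <= 0.
    have -> : (p.1 v * - n.1 v) * (q p - q n) = - n.1 v * (q p * p.1 v) + p.1 v * (q n * n.1 v) by ring.
    rewrite -Ep -En /S. lra.
  rewrite pmulr_rle0; first by rewrite subr_le0.
  by rewrite mulr_gt0 // oppr_gt0.
exists (d + x v).
apply/allP => c cL; rewrite /satc sum_upd addrK.
have [cp | cn | c0] := ltgtP (c.1 v) 0.
- have cN : c \in Ns by rewrite mem_filter cp.
  have dq : d <= q c.
    apply: foldr_max_le; first by move=> p pP; apply: key.
    exact: foldr_min_le.
  have : c.1 v * q c <= c.1 v * d by apply: ler_wnM2l => //; rewrite ltW.
  rewrite mulrC /q divfK ?lt_eqF //. rewrite -/(S c). lra.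
- have cP : c \in Ps by rewrite mem_filter cn.
  have dq : q c <= d by apply: foldr_max_ge.
  have : c.1 v * q c <= c.1 v * d by apply: ler_wpM2l => //; rewrite ltW.
  rewrite mulrC /q divfK ?gt_eqF //. rewrite -/(S c). lra.
- have : satc x c by apply: H; rewrite mem_cat mem_filter c0 eqxx cL.
  by rewrite /satc c0 mul0r addr0.
Qed.

Definition elimall (R : realFieldType) (I : finType) (vs : seq I) (L : seq ({ffun I -> R} * R)) :=
  foldr (fun v L' => elimv v L') L vs.

Lemma elimall_sound (R : realFieldType) (I : finType) vs (L : seq ({ffun I -> R} * R)) x :
  all (satc x) L -> all (satc x) (elimall vs L).
Proof. by elim: vs => //= v vs IH H; apply: elimv_sound; apply: IH. Qed.

Lemma elimall_complete (R : realFieldType) (I : finType) vs (L : seq ({ffun I -> R} * R)) x :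
  all (satc x) (elimall vs L) ->
  exists y, all (satc y) L /\ forall i, i \notin vs -> y i = x i.
Proof.
elim: vs x => [|v vs IH] x /=; first by move=> H; exists x.
move=> /elimv_complete [t /IH [y [Hy Ey]]].
exists y; split => // i; rewrite inE negb_or => /andP [iv ivs].
by rewrite Ey // /upd (negbTE iv).
Qed.

Lemma elimall_zero (R : realFieldType) (I : finType) vs (L : seq ({ffun I -> R} * R)) c w :
  c \in elimall vs L -> w \in vs -> c.1 w = 0.
Proof.
elim: vs c => [|v vs IH] c //=.
rewrite mem_cat => /orP [|].
  rewrite mem_filter => /andP [/eqP cv cL]; rewrite inE => /orP [/eqP -> //|].
  exact: IH.
case/allpairsP => -[p n] /= [Hp Hn ->].
move: Hp Hn; rewrite !mem_filter => /andP [_ pL] /andP [_ nL].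
rewrite /comb /= ffunE inE => /orP [/eqP -> | wvs]; first by ring.
by rewrite (IH _ pL wvs) (IH _ nL wvs); ring.
Qed.


Definition liftc (R : realFieldType) (V : finType) (cb : {ffun V -> R} * R) :
  {ffun (V + unit)%type -> R} * R :=
  ([ffun i => match i with inl v => cb.1 v | inr _ => 0 end], cb.2).

Definition extv (R : realFieldType) (V : finType) (x : V -> R) (t : R) : (V + unit)%type -> R :=
  fun i => match i with inl v => x v | inr _ => t end.

Lemma sat_liftc (R : realFieldType) (V : finType) (x : V -> R) t cb :
  satc (extv x t) (liftc cb) = satc x cb.
Proof.
by rewrite /satc /= big_sumType sum_unit /= ffunE mul0r addr0; under eq_bigr do rewrite ffunE.
Qed.

Lemma lp_min (R : realFieldType) (V : finType) (L : seq ({ffun V -> R} * R)) (c : V -> R) :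
  (exists x : V -> R, all (satc x) L) ->
  (forall x : V -> R, all (satc x) L -> 0 <= \sum_v c v * x v) ->
  exists x : V -> R, all (satc x) L /\
    forall y : V -> R, all (satc y) L -> \sum_v c v * x v <= \sum_v c v * y v.
Proof.
move=> [x0 Hx0] Hlb.
pose I := (V + unit)%type.
pose ob1 : {ffun I -> R} * R := ([ffun i => match i with inl v => c v | inr _ => -1 end], 0).
pose ob2 : {ffun I -> R} * R := ([ffun i => match i with inl v => - c v | inr _ => 1 end], 0).
pose L2 := ob1 :: ob2 :: map (@liftc R V) L.
pose vs := [seq inl v : I | v <- enum V].
pose L' := elimall vs L2.
have satL' : forall (y : I -> R) c', c' \in L' -> satc y c' = (c'.2 <= c'.1 (inr tt) * y (inr tt)).
  move=> y c' cL; rewrite /satc big_sumType /= sum_unit big1 ?add0r // => v _.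
  by rewrite (elimall_zero cL) ?mul0r // mem_map ?mem_enum //; move=> a b [].
pose Feas t := all (fun c' : {ffun I -> R} * R => c'.2 <= c'.1 (inr tt) * t) L'.
have satL2 : forall (x : V -> R) t, all (satc (extv x t)) L2 =
    [&& 0 <= \sum_v c v * x v - t, 0 <= t - \sum_v c v * x v & all (satc x) L].
  move=> x t; rewrite /L2 /= all_map.
  have -> : all (preim (@liftc R V) (satc (extv x t))) L = all (satc x) L.
    by apply: eq_all => cb /=; rewrite sat_liftc.
  rewrite /satc /= !big_sumType !sum_unit /= !ffunE.
  under eq_bigr do rewrite ffunE. 
  rewrite [X in 0 <= X + 1 * t](eq_bigr (fun i => - (c i * x i))); last first.
    by move=> i _; rewrite ffunE mulNr.
  by rewrite sumrN mulN1r mul1r [_ + t]addrC.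
have F1 : forall x : V -> R, all (satc x) L -> Feas (\sum_v c v * x v).
  move=> x Hx.
  have : all (satc (extv x (\sum_v c v * x v))) L' by
    apply: elimall_sound; rewrite satL2 Hx subrr lexx.
  move/allP => H; apply/allP => c' cL; by move: (H _ cL); rewrite satL'.
have F2 : forall t, Feas t -> exists x : V -> R, all (satc x) L /\ \sum_v c v * x v = t.
  move=> t /allP Ht.
  have : all (satc (extv (fun _ => 0) t)) L'.
    by apply/allP => c' cL; rewrite satL' //; apply: Ht.
  case/elimall_complete => y [Hy Ey].
  have yt : y (inr tt) = t by rewrite Ey //; apply/mapP => -[v _].
  have Ey' : y =1 extv (fun v => y (inl v)) t by case=> [v|[]] //=.
  move: Hy; rewrite (eq_all (a2 := satc (extv (fun v => y (inl v)) t))); last first.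
    by move=> cb; rewrite /satc; apply: congr1; apply: eq_bigr => i _; rewrite Ey'.
  rewrite satL2 => /and3P [h1 h2 h3]; exists (fun v => y (inl v)); split => //.
  by apply/eqP; rewrite eq_le -subr_ge0 h2 -subr_ge0 h1.
have Ft0 := F1 _ Hx0.
pose t0 := \sum_v c v * x0 v.
pose Pos := filter (fun c' : {ffun I -> R} * R => 0 < c'.1 (inr tt)) L'.
pose q (c' : {ffun I -> R} * R) := c'.2 / c'.1 (inr tt).
pose ts := foldr (fun c' acc => Num.max (q c') acc) (Num.min t0 (-1)) Pos.
have qle : forall t c', Feas t -> c' \in Pos -> q c' <= t.
  move=> t c' /allP Ft; rewrite mem_filter => /andP [cp cL].
  have := Ft _ cL; rewrite /q ler_pdivrMr // mulrC //.
have tst0 : ts <= t0.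
  apply: foldr_max_le; first by move=> c' cP; apply: qle.
  by rewrite ge_min lexx.
have Fts : Feas ts.
  apply/allP => c' cL; have [cp | cn] := ltP 0 (c'.1 (inr tt)).
    have cP : c' \in Pos by rewrite mem_filter cp.
    have : q c' <= ts by apply: foldr_max_ge.
    by rewrite /q ler_pdivrMr // mulrC.
  apply: le_trans (allP Ft0 _ cL) _; exact: ler_wnM2l.
have [xs [Hxs Exs]] := F2 _ Fts.
exists xs; split => // y Hy.
have Fy := F1 _ Hy; rewrite Exs.
apply: foldr_max_le; first by move=> c' cP; apply: qle.
have := Hlb _ Hy; rewrite ge_min => H; apply/orP; right; lra.
Qed.

Definition Lfd (R : realFieldType) (T : finType) (e : rel T) : seq ({ffun T -> R} * R) :=
  [seq ([ffun u => (u == v)%:R], 0) | v <- enum T] ++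
  [seq ([ffun u => - (u == v)%:R], -1) | v <- enum T] ++
  [seq ([ffun u => (u \in cnbhd e v)%:R], 1) | v <- enum T].

Lemma sum_pick1 (R : realFieldType) (T : finType) (x : T -> R) v :
  \sum_u [ffun u => (u == v)%:R] u * x u = x v.
Proof.
rewrite (bigD1 v) //= ffunE eqxx mul1r big1 ?addr0 // => u /negbTE uv.
by rewrite ffunE uv mul0r.
Qed.

Lemma sum_pickA (R : realFieldType) (T : finType) (x : T -> R) (A : {set T}) :
  \sum_u [ffun u => (u \in A)%:R] u * x u = \sum_(u in A) x u.
Proof.
rewrite [RHS]big_mkcond; apply: eq_bigr => u _; rewrite ffunE.
by case: (u \in A); rewrite ?mul1r ?mul0r.
Qed.

Lemma Lfd_sat (R : realFieldType) (T : finType) (e : rel T) (x : T -> R) :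
  all (satc x) (Lfd R e) <-> frac_dominating e x.
Proof.
rewrite /Lfd !all_cat !all_map.
have mE : forall v : T, v \in Finite.enum T by move=> v; rewrite -enumT mem_enum.
split.
  move=> /and3P [/allP H1 /allP H2 /allP H3]; split.
    move=> v; have := H1 v (mE v); have := H2 v (mE v).
    rewrite /= /satc /=.
    rewrite (eq_bigr (fun u => - ([ffun u => (u == v)%:R] u * x u))); last first.
      by move=> u _; rewrite !ffunE mulNr.
    rewrite sumrN !sum_pick1 => h2 h1; apply/andP; split => //.
    by rewrite -lerN2.
  move=> v; have := H3 v (mE v).
  by rewrite /= /satc /= sum_pickA.
move=> [H1 H2]; apply/and3P; split; apply/allP => v _ /=; rewrite /satc /=.
- by rewrite sum_pick1; case/andP: (H1 v).
- rewrite (eq_bigr (fun u => - ([ffun u => (u == v)%:R] u * x u))); last first.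
    by move=> u _; rewrite !ffunE mulNr.
  by rewrite sumrN sum_pick1 lerN2; case/andP: (H1 v).
- by rewrite sum_pickA.
Qed.

Lemma gamma_f_spec (R : realFieldType) (T : finType) (e : rel T) :
  is_gamma_f e (gamma_f e R).
Proof.
rewrite /gamma_f; apply: epsilon_spec.
have [x [Hx Hmin]] : exists x : T -> R, all (satc x) (Lfd R e) /\
    forall y : T -> R, all (satc y) (Lfd R e) ->
      \sum_v (fun _ => 1) v * x v <= \sum_v (fun _ => 1) v * y v.
  apply: lp_min.
    exists (fun _ => 1); apply/Lfd_sat; split => v; first by rewrite ler01 lexx.
    rewrite (bigD1 v) /=; last by rewrite /cnbhd in_setU1 eqxx.
    by rewrite lerDl sumr_ge0.
  move=> y /Lfd_sat [Hy _]; apply: sumr_ge0 => v _; rewrite mul1r.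
  by case/andP: (Hy v).
exists (\sum_v x v); split.
  by exists x; split => //; apply/Lfd_sat.
move=> f /Lfd_sat Hf; have := Hmin f Hf.
by under eq_bigr do rewrite mul1r; under [X in _ <= X]eq_bigr do rewrite mul1r.
Qed.
Lemma core_upper (R : realFieldType) (T U : finType) (g : rel T) (h : rel U)
  (gsym : symmetric g) (girr : irreflexive g) (hsym : symmetric h) (hirr : irreflexive h)
  (S : {set T * U}) (f : minus_vert h -> R) :
  is_open_packing (strong_prod g h) S ->
  (forall s, s \in S -> nonisolated g s.1 && nonisolated h s.2) ->
  frac_dominating (minus_rel h) f ->
  (#|S|%:R <= (rho (minus_rel g))%:R * \sum_u f u).
Proof.
move=> Hop Hni [Hf01 Hfd].
have step1 : forall s, s \in S -> 1 <= \sum_(u | val u \in cnbhd h s.2) f u.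
  move=> s sS; have ns2 : nonisolated h s.2 by case/andP: (Hni _ sS).
  have := Hfd (exist _ s.2 ns2).
  congr (_ <= _); apply: eq_bigl => u; rewrite !cnbhdE /minus_rel /=.
  by rewrite -val_eqE.
have : #|S|%:R <= \sum_(s in S) \sum_(u | val u \in cnbhd h s.2) f u.
  by rewrite -sumr_const; apply: ler_sum => s sS; exact: step1.
move/le_trans; apply.
rewrite (eq_bigr (fun s => \sum_u (if val u \in cnbhd h s.2 then f u else 0))); last first.
  by move=> s _; rewrite big_mkcond.
rewrite exchange_big /= mulr_sumr; apply: ler_sum => u _.
set B := [set s in S | val u \in cnbhd h s.2].
have Bm : forall s, (s \in B) = (s \in S) && (val u \in cnbhd h s.2) by move=> s; rewrite in_set.
have -> : \sum_(s in S) (if val u \in cnbhd h s.2 then f u else 0) = f u *+ #|B|.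
  by rewrite -sumr_const (eq_bigl _ _ Bm) -big_mkcondr.
rewrite -[f u *+ _]mulr_natr [f u * _]mulrC; apply: ler_wpM2r; first by case/andP: (Hf01 u).
rewrite ler_nat; apply: Bu_bound => //; last exact: valP.
by move=> s sS; case/andP: (Hni _ sS).
Qed.

Unset Implicit Arguments.

Theorem mainTheorem11 (R : realFieldType) (T U : finType) (g : rel T) (h : rel U)
  (gsym : symmetric g) (girr : irreflexive g)
  (hsym : symmetric h) (hirr : irreflexive h) :
  let iG := num_isolated g in
  let iH := num_isolated h in
  let lhs : R := (rho_o (strong_prod g h))%:R in
  let rest : R := ((iG * rho_o h)%N%:R + (iH * rho_o g)%N%:R - (iG * iH)%N%:R)%R in
  ((rho (minus_rel g) * rho (minus_rel h))%N%:R + rest <= lhs)%R /\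
  (lhs <= Num.min ((rho (minus_rel g))%:R * gamma_f (minus_rel h) R)
                  ((rho (minus_rel h))%:R * gamma_f (minus_rel g) R) + rest)%R.
Proof.
move=> iG iH lhs rest; rewrite /lhs /rest /iG /iH.
have low := lower_nat gsym girr hsym hirr.
have [S [Sop ES]] := rho_o_attained (strong_prod g h).
have up := upper_nat gsym girr hsym hirr Sop.
set S1 := [set s in S | nonisolated g s.1 && nonisolated h s.2] in up.
have S1op : is_open_packing (strong_prod g h) S1.
  by apply: op_sub Sop; apply/subsetP => s; rewrite in_set => /andP [].
have S1n : forall s, s \in S1 -> nonisolated g s.1 && nonisolated h s.2.
  by move=> s; rewrite in_set => /andP [].
have [[fH [fHd fHs]] _] := gamma_f_spec R (minus_rel h).
have [[fG [fGd fGs]] _] := gamma_f_spec R (minus_rel g).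
have b1 : (#|S1|%:R : R) <= (rho (minus_rel g))%:R * gamma_f (minus_rel h) R.
  by rewrite -fHs; apply: core_upper.
have b2 : (#|S1|%:R : R) <= (rho (minus_rel h))%:R * gamma_f (minus_rel g) R.
  rewrite -fGs -(card_imset _ (can_inj (@swpK T U))); apply: core_upper => //.
    exact: op_swap.
  by move=> s /imsetP [s0 s0S ->]; rewrite /swp /= andbC; apply: S1n.
have lowR := low; rewrite -(ler_nat R) !natrD in lowR.
have upR := up; rewrite -(ler_nat R) !natrD (mulnC (num_isolated h)) in upR.
rewrite ES in lowR *.
split; first lra.
rewrite -lerBlDr le_min; apply/andP; split; lra.
Qed.
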